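(* Let $n,k$ be integers with $2<2k\le n$. Suppose that the integer program $( * )$ has a solution but no trivial solution, and let $(\mathsf{u},\mathsf{v}_+,\mathsf{v}_-,r,t)$ be a (necessarily nontrivial) solution of $( * )$. Then there is a homomorphism $K_{4r+2}\to \mathrm{Pet}(n,k)^{2r+1}$ (i.e., $\mathrm{Pet}(n,k)^{2r+1}$ contains a clique on $4r+2$ vertices).
   Context: For integers $n,k$ with $2<2k\le n$, the generalized Petersen graph $\mathrm{Pet}(n,k)$ has vertex set $\{u_0,\dots,u_{n-1}\}\cup\{v_0,\dots,v_{n-1}\}$ and edge set $\{u_iu_{i+1}\}\cup\{u_iv_i\}\cup\{v_iv_{i+k}\}$, indices modulo $n$. The integer program $( * )$ is: minimize $\mathsf{u}+\mathsf{v}_++\mathsf{v}_-$ over integers $\mathsf{u},\mathsf{v}_+,\mathsf{v}_-,r\ge 0$ and $t\in\mathbb{Z}$ subject to $\mathsf{u}+k(\mathsf{v}_+-\mathsf{v}_-)=tn$ and $\mathsf{u}+\mathsf{v}_++\mathsf{v}_-=2r+1$. A solution of $( * )$ is a minimizer $(\mathsf{u},\mathsf{v}_+,\mathsf{v}_-,r,t)$; it is trivial if $\mathsf{u}=0$ or $\mathsf{v}_++\mathsf{v}_-=0$, and nontrivial otherwise. For a graph $G$ and positive integer $m$, the power graph $G^m$ has vertex set $V(G)$, two distinct vertices being adjacent iff there is a walk of length exactly $m$ between them in $G$. A homomorphism $G\to H$ is a map $V(G)\to V(H)$ sending edges to edges. *)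

(* Defs.v *)
From mathcomp Require Import all_boot all_order all_algebra.
Set Implicit Arguments. Unset Strict Implicit. Unset Printing Implicit Defensive.
Import GRing.Theory Num.Theory.

(* Vertices of Pet(n,k): (false, i) = u_i, (true, i) = v_i, i : 'I_n. *)
Definition pet_vertex (n : nat) : finType := (bool * 'I_n)%type.

Definition pet_adj (n k : nat) : rel (pet_vertex n) :=
  fun x y =>
    match x, y with
    | (false, i), (false, j) => (j == (i + 1) %% n :> nat) || (i == (j + 1) %% n :> nat)
    | (false, i), (true, j) => i == j
    | (true, i), (false, j) => i == j
    | (true, i), (true, j) => (j == (i + k) %% n :> nat) || (i == (j + k) %% n :> nat)
    end.

Definition walk_of_length (T : eqType) (e : rel T) (m : nat) (x y : T) : Prop :=
  exists p : seq T, size p = m /\ path e x p /\ last x p = y.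

Definition power_adj (T : eqType) (e : rel T) (m : nat) (x y : T) : Prop :=
  x != y /\ walk_of_length e m x y.

Definition complete_hom (T : Type) (N : nat) (adj : T -> T -> Prop) (f : 'I_N -> T) : Prop :=
  forall i j : 'I_N, i != j -> adj (f i) (f j).

Definition ip_feasible (n k : nat) (u vp vm r : nat) (t : int) : Prop :=
  (u%:Z + k%:Z * (vp%:Z - vm%:Z) = t * n%:Z)%R /\ u + vp + vm = 2 * r + 1.

Definition ip_solution (n k : nat) (u vp vm r : nat) (t : int) : Prop :=
  ip_feasible n k u vp vm r t /\
  forall u' vp' vm' r' t', ip_feasible n k u' vp' vm' r' t' -> u + vp + vm <= u' + vp' + vm'.

Definition ip_trivial (u vp vm : nat) : Prop := u = 0 \/ vp + vm = 0.

Arguments pet_adj n k : clear implicits.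
Arguments ip_feasible n k u vp vm r t : clear implicits.
Arguments ip_solution n k u vp vm r t : clear implicits.

(* Main.v *)
Require Import Defs.
From mathcomp Require Import all_boot all_order all_algebra.
From mathcomp Require Import zify ring.
Import GRing.Theory Num.Theory.
Local Open Scope ring_scope.

Lemma walk_cat (T : eqType) (e : rel T) m1 m2 x y z :
  walk_of_length e m1 x y -> walk_of_length e m2 y z -> walk_of_length e (m1 + m2) x z.
Proof.
move=> [p1 [s1 [h1 l1]]] [p2 [s2 [h2 l2]]]; exists (p1 ++ p2).
by rewrite size_cat s1 s2 cat_path last_cat l1 h1 h2.
Qed.

Lemma walk1 (T : eqType) (e : rel T) x y : e x y -> walk_of_length e 1 x y.
Proof. by move=> h; exists [:: y]; rewrite /= h. Qed.

Lemma walk0 (T : eqType) (e : rel T) x : walk_of_length e 0 x x.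
Proof. by exists [::]. Qed.

Definition idx (n : nat) (z : int) : nat := `|(z %% n%:Z)%Z|%N.

Lemma idxE (n : nat) z : (0 < n)%N -> (idx n z)%:Z = (z %% n%:Z)%Z.
Proof. by move=> n0; rewrite /idx gez0_abs // modz_ge0 //; lia. Qed.

Lemma idx_lt n z : (0 < n)%N -> (idx n z < n)%N.
Proof. by move=> n0; rewrite -ltz_nat idxE // ltz_pmod //; lia. Qed.

Definition V n (n0 : (0 < n)%N) (b : bool) (z : int) : pet_vertex n :=
  (b, Ordinal (@idx_lt n z n0)).
Arguments V {n}.

Lemma V_mod n n0 b z1 z2 : (z1 %% n%:Z)%Z = (z2 %% n%:Z)%Z -> @V n n0 b z1 = V n0 b z2.
Proof.
move=> h; rewrite /V; congr pair; apply: val_inj => /=.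
by apply/eqP; rewrite -eqz_nat !idxE // h.
Qed.

Lemma V_inj n n0 b1 b2 z1 z2 : @V n n0 b1 z1 = V n0 b2 z2 ->
  b1 = b2 /\ (z1 %% n%:Z)%Z = (z2 %% n%:Z)%Z.
Proof.
rewrite /V => [[-> h]]; split => //.
by rewrite -!idxE // h.
Qed.

Lemma idx_add n (n0 : (0 < n)%N) z (c : nat) :
  idx n (z + c%:Z) = ((idx n z + c) %% n)%N.
Proof.
apply/eqP; rewrite -eqz_nat idxE // -modz_nat PoszD idxE //.
by apply/eqP; rewrite modzDml.
Qed.

Lemma pet_sym n k x y : pet_adj n k x y = pet_adj n k y x.
Proof.
by case: x => [[] i]; case: y => [[] j]; rewrite /=; [rewrite orbC|rewrite eq_sym|rewrite eq_sym|rewrite orbC].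
Qed.

Lemma e_out n k n0 z : pet_adj n k (@V n n0 false z) (V n0 false (z + 1)).
Proof. by rewrite /= (@idx_add n n0 z 1) eqxx. Qed.

Lemma e_in n k n0 z : pet_adj n k (@V n n0 true z) (V n0 true (z + k%:Z)).
Proof. by rewrite /= (@idx_add n n0 z k) eqxx. Qed.

Lemma e_sp n k n0 b z : pet_adj n k (@V n n0 b z) (V n0 (~~ b) z).
Proof. by case: b; rewrite /= eqxx. Qed.

Arguments walk_cat {T e m1 m2 x y z}.
Arguments walk1 {T e x y}.
Arguments walk0 {T e x}.
Arguments e_out {n} k n0 z.
Arguments e_in {n} k n0 z.
Arguments e_sp {n} k n0 b z.
Arguments idx_add {n} n0 z c.

Lemma walk_outP {n} k n0 (m : nat) z :
  walk_of_length (pet_adj n k) m (@V n n0 false z) (V n0 false (z + m%:Z)).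
Proof.
elim: m z => [|m IH] z; first by rewrite addr0; apply: walk0.
have := walk_cat (walk1 (e_out k n0 z)) (IH (z + 1)).
by have -> : z + 1 + m%:Z = z + m.+1%:Z by lia.
Qed.

Lemma walk_outN {n} k n0 (m : nat) z :
  walk_of_length (pet_adj n k) m (@V n n0 false z) (V n0 false (z - m%:Z)).
Proof.
elim: m z => [|m IH] z; first by rewrite subr0; apply: walk0.
have e1 : pet_adj n k (V n0 false z) (V n0 false (z - 1)).
  by rewrite pet_sym; have := e_out k n0 (z - 1); rewrite subrK.
have := walk_cat (walk1 e1) (IH (z - 1)).
by have -> : z - 1 - m%:Z = z - m.+1%:Z by lia.
Qed.

Lemma walk_out {n} k n0 (a : int) z :
  walk_of_length (pet_adj n k) `|a|%N (@V n n0 false z) (V n0 false (z + a)).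
Proof.
case: a => m; first exact: walk_outP.
by rewrite NegzE /=; apply: walk_outN.
Qed.

Lemma walk_inP {n} k n0 (m : nat) z :
  walk_of_length (pet_adj n k) m (@V n n0 true z) (V n0 true (z + k%:Z * m%:Z)).
Proof.
elim: m z => [|m IH] z; first by rewrite mulr0 addr0; apply: walk0.
have := walk_cat (walk1 (e_in k n0 z)) (IH (z + k%:Z)).
by have -> : z + k%:Z + k%:Z * m%:Z = z + k%:Z * m.+1%:Z by lia.
Qed.

Lemma walk_inN {n} k n0 (m : nat) z :
  walk_of_length (pet_adj n k) m (@V n n0 true z) (V n0 true (z - k%:Z * m%:Z)).
Proof.
elim: m z => [|m IH] z; first by rewrite mulr0 subr0; apply: walk0.
have e1 : pet_adj n k (V n0 true z) (V n0 true (z - k%:Z)).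
  by rewrite pet_sym; have := e_in k n0 (z - k%:Z); rewrite subrK.
have := walk_cat (walk1 e1) (IH (z - k%:Z)).
by have -> : z - k%:Z - k%:Z * m%:Z = z - k%:Z * m.+1%:Z by lia.
Qed.

Lemma walk_in {n} k n0 (b : int) z :
  walk_of_length (pet_adj n k) `|b|%N (@V n n0 true z) (V n0 true (z + k%:Z * b)).
Proof.
case: b => m; first exact: walk_inP.
by rewrite NegzE /= mulrN; apply: walk_inN.
Qed.

Lemma walk_sp {n} k n0 b z :
  walk_of_length (pet_adj n k) 1 (@V n n0 b z) (V n0 (~~ b) z).
Proof. exact/walk1/e_sp. Qed.

Lemma walk_gen n k n0 (x y : bool) (a b : int) z :
  walk_of_length (pet_adj n k) (`|a|%N + `|b|%N + (if x == y then 2 else 1))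
    (@V n n0 x z) (V n0 y (z + a + k%:Z * b)).
Proof.
case: x; case: y => /=.
- have := walk_cat (walk_sp k n0 true z) (walk_cat (walk_out k n0 a z)
     (walk_cat (walk_sp k n0 false (z + a)) (walk_in k n0 b (z + a)))).
  by have -> : (1 + (`|a| + (1 + `|b|)) = `|a| + `|b| + 2)%N by lia.
- have := walk_cat (walk_in k n0 b z) (walk_cat (walk_sp k n0 true _)
     (walk_out k n0 a (z + k%:Z * b))).
  have -> : (`|b| + (1 + `|a|) = `|a| + `|b| + 1)%N by lia.
  by have -> : z + k%:Z * b + a = z + a + k%:Z * b by lia.
- have := walk_cat (walk_out k n0 a z) 
     (walk_cat (walk_sp k n0 false (z + a)) (walk_in k n0 b (z + a))).
  by have -> : (`|a| + (1 + `|b|) = `|a| + `|b| + 1)%N by lia.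
- have := walk_cat (walk_out k n0 a z) (walk_cat (walk_sp k n0 false (z + a))
     (walk_cat (walk_in k n0 b (z + a)) (walk_sp k n0 true _))).
  by have -> : (`|a| + (1 + (`|b| + 1)) = `|a| + `|b| + 2)%N by lia.
Qed.

Lemma walk_pad2 n k L d (x y : pet_vertex n) :
  walk_of_length (pet_adj n k) L x y -> walk_of_length (pet_adj n k) (L + d.*2) x y.
Proof.
move=> h; elim: d => [|d IH]; first by rewrite addn0.
case: y h IH => b i h IH.
have e1 : pet_adj n k (b, i) (~~ b, i) by case: b {h IH}; rewrite /= eqxx.
have e2 : pet_adj n k (~~ b, i) (b, i) by case: b {h IH e1}; rewrite /= eqxx.
have := walk_cat IH (walk_cat (walk1 e1) (walk1 e2)).
by have -> : (L + d.*2 + (1 + 1) = L + d.+1.*2)%N by lia.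
Qed.

Lemma walk_pad n k L M (x y : pet_vertex n) :
  (L <= M)%N -> odd L = odd M ->
  walk_of_length (pet_adj n k) L x y -> walk_of_length (pet_adj n k) M x y.
Proof.
move=> hLM ho h.
have hd : odd (M - L) = false by rewrite oddB // ho addbb.
have := @walk_pad2 n k L ((M - L)./2) x y h.
have := odd_double_half (M - L); rewrite hd add0n => ->.
by rewrite subnKC.
Qed.

Lemma short n k u vp vm r t (hs : ip_solution n k u vp vm r t) (a b : int) :
  (n%:Z %| a + k%:Z * b)%Z -> odd (`|a| + `|b|)%N -> (u + vp + vm <= `|a| + `|b|)%N.
Proof.
case/dvdzP => q hq ho.
have [R hr] : exists R, (`|a| + `|b| = 2 * R + 1)%N.
  by exists (`|a| + `|b|)./2; rewrite -{1}(odd_double_half (`|a| + `|b|)) ho; lia.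
case: hs => _ hmin.
move: hq hr ho; case: a => a; case: b => b; rewrite ?NegzE /= => hq hr ho.
- have hf : ip_feasible n k a b 0%N R q.
    by rewrite /ip_feasible; split; lia.
  by have := hmin _ _ _ _ _ hf; lia.
- have hf : ip_feasible n k a 0%N b.+1 R q.
    by rewrite /ip_feasible; split; lia.
  by have := hmin _ _ _ _ _ hf; lia.
- have hf : ip_feasible n k a.+1 0%N b R (- q).
    by rewrite /ip_feasible; split; lia.
  by have := hmin _ _ _ _ _ hf; lia.
- have hf : ip_feasible n k a.+1 b.+1 0%N R (- q).
    by rewrite /ip_feasible; split; lia.
  by have := hmin _ _ _ _ _ hf; lia.
Qed.

Definition posf (k u : nat) (s : int) (i : nat) : int :=
  (minn i u)%:Z + k%:Z * (s * (i - u)%N%:Z).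

Lemma disp1 k u s i j : s = 1 \/ s = -1 ->
  exists a b : int, posf k u s i + a + k%:Z * b = posf k u s j /\
    (`|a| + `|b| = `|j%:Z - i%:Z|)%N.
Proof.
move=> hs1; exists ((minn j u)%:Z - (minn i u)%:Z).
exists (s * ((j - u)%N%:Z - (i - u)%N%:Z)); split.
  by rewrite /posf; ring.
by case: hs1 => ->; lia.
Qed.

Lemma disp2 n k u vp vm r (t : int) s i j :
  s = 1 \/ s = -1 -> vp%:Z - vm%:Z = s * (vp + vm)%N%:Z ->
  u%:Z + k%:Z * (vp%:Z - vm%:Z) = t * n%:Z -> (u + vp + vm = 2 * r + 1)%N ->
  (i <= 2 * r)%N -> (j <= 2 * r)%N ->
  exists a b : int, ((posf k u s i + a + k%:Z * b) %% n%:Z)%Z = (posf k u s j %% n%:Z)%Z /\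
    (`|a| + `|b| = 2 * r + 1 - `|j%:Z - i%:Z|)%N.
Proof.
move=> hs1 hsv hfe hsum hi hj.
have hw : u%:Z + k%:Z * (s * (vp + vm)%N%:Z) = t * n%:Z by rewrite -hsv.
case: (leqP i j) => hij.
- exists ((minn j u)%:Z - (minn i u)%:Z - u%:Z).
  exists (s * ((j - u)%N%:Z - (i - u)%N%:Z - (vp + vm)%N%:Z)); split.
    have -> : posf k u s i + ((minn j u)%:Z - (minn i u)%:Z - u%:Z) +
       k%:Z * (s * ((j - u)%N%:Z - (i - u)%N%:Z - (vp + vm)%N%:Z))
       = (- t) * n%:Z + posf k u s j.
      by rewrite mulNr -hw /posf; ring.
    by apply/eqP; rewrite modzMDl.
  by case: hs1 => ->; lia.
- exists ((minn j u)%:Z - (minn i u)%:Z + u%:Z).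
  exists (s * ((j - u)%N%:Z - (i - u)%N%:Z + (vp + vm)%N%:Z)); split.
    have -> : posf k u s i + ((minn j u)%:Z - (minn i u)%:Z + u%:Z) +
       k%:Z * (s * ((j - u)%N%:Z - (i - u)%N%:Z + (vp + vm)%N%:Z))
       = t * n%:Z + posf k u s j.
      by rewrite -hw /posf; ring.
    by apply/eqP; rewrite modzMDl.
  by case: hs1 => ->; lia.
Qed.

Lemma reach n k u vp vm r (t : int) s (n0 : (0 < n)%N)
  (hs : ip_solution n k u vp vm r t) (hs1 : s = 1 \/ s = -1)
  (hsv : vp%:Z - vm%:Z = s * (vp + vm)%N%:Z) (x y : bool) (i j : nat) :
  (i <= 2 * r)%N -> (j <= 2 * r)%N -> (x != y) || (i != j) ->
  power_adj (pet_adj n k) (2 * r + 1) (V n0 x (posf k u s i)) (V n0 y (posf k u s j)).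
Proof.
move=> hi hj hne.
have [[hfe hsum] _] := hs.
set m := `|j%:Z - i%:Z|%N.
have hm : (m = (m./2).*2 + odd m)%N by rewrite addnC odd_double_half.
have hmr : (m <= 2 * r)%N by rewrite /m; lia.
have hm0 : i != j -> (0 < m)%N by rewrite /m => /eqP; lia.
have [a1 [b1 [e1 l1]]] := disp1 k u s i j hs1.
have [a2 [b2 [e2 l2]]] := @disp2 n k u vp vm r t s i j hs1 hsv hfe hsum hi hj.
split.
- case: (eqVneq x y) hne => [<- /= hij|hxy _].
  + apply/negP => /eqP /V_inj [_ hmod].
    have d1 : (n%:Z %| a1 + k%:Z * b1)%Z.
      have -> : a1 + k%:Z * b1 = posf k u s j - posf k u s i by rewrite -e1; ring.
      by rewrite -eqz_mod_dvd hmod.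
    have d2 : (n%:Z %| a2 + k%:Z * b2)%Z.
      have -> : a2 + k%:Z * b2 = (posf k u s i + a2 + k%:Z * b2) - posf k u s i by ring.
      by rewrite -eqz_mod_dvd e2 hmod.
    have hp := hm0 hij.
    case ho: (odd m) hm => hm.
      have := @short _ _ _ _ _ _ _ hs _ _ d1; rewrite l1 -/m ho => /(_ isT) hsh.
      by clear -hsh hsum hmr hp; lia.
    have hmr1 : (m <= 2 * r + 1)%N by clear -hmr; lia.
    have ho2 : odd (2 * r + 1 - m) by rewrite oddB // ho oddD oddM andFb.
    have := @short _ _ _ _ _ _ _ hs _ _ d2; rewrite l2 -/m => /(_ ho2) hsh.
    by clear -hsh hsum hmr hp; lia.
  + by apply: contra_neq hxy => /V_inj [].
- case: (eqVneq x y) hne => [<- /= hij|hxy _].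
  + have := hm0 hij.
    case ho: (odd m) hm => hm hm1.
    * have W := @walk_gen n k n0 x x a1 b1 (posf k u s i).
      rewrite e1 eqxx l1 -/m in W.
      have := @walk_pad2 _ _ _ (r - m./2 - 1) _ _ W.
      by have -> : (m + 2 + (r - m./2 - 1).*2 = 2 * r + 1)%N by clear -hm hmr; lia.
    * have W := @walk_gen n k n0 x x a2 b2 (posf k u s i).
      rewrite (@V_mod n n0 x _ _ e2) eqxx l2 -/m in W.
      have := @walk_pad2 _ _ _ (m./2 - 1) _ _ W.
      by have -> : (2 * r + 1 - m + 2 + (m./2 - 1).*2 = 2 * r + 1)%N by clear -hm hmr hm1; lia.
  + idtac.
    case ho: (odd m) hm => hm.
    * have W := @walk_gen n k n0 x y a2 b2 (posf k u s i).
      rewrite (@V_mod n n0 y _ _ e2) (negbTE hxy) l2 -/m in W.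
      have := @walk_pad2 _ _ _ (m./2) _ _ W.
      by have -> : (2 * r + 1 - m + 1 + (m./2).*2 = 2 * r + 1)%N by clear -hm hmr; lia.
    * have W := @walk_gen n k n0 x y a1 b1 (posf k u s i).
      rewrite e1 (negbTE hxy) l1 -/m in W.
      have := @walk_pad2 _ _ _ (r - m./2) _ _ W.
      by have -> : (m + 1 + (r - m./2).*2 = 2 * r + 1)%N by clear -hm hmr; lia.
Qed.

Local Close Scope ring_scope.

Theorem theorem3 (n k : nat) (hk : 2 < 2 * k) (hkn : 2 * k <= n)
  (hsol : exists u vp vm r t, ip_solution n k u vp vm r t)
  (hnotriv : forall u vp vm r t, ip_solution n k u vp vm r t -> ~ ip_trivial u vp vm)
  (u vp vm r : nat) (t : int) (hs : ip_solution n k u vp vm r t) :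
  exists f : 'I_(4 * r + 2) -> pet_vertex n,
    complete_hom (@power_adj (pet_vertex n) (pet_adj n k) (2 * r + 1)) f.
Proof.
have n0 : (0 < n)%N by clear -hk hkn; lia.
have [[hfe hsum] hmin] := hs.
have hv : vp = 0%N \/ vm = 0%N.
  case: (posnP vp) => [->|hp]; first by left.
  case: (posnP vm) => [->|hm]; first by right.
  have hf : ip_feasible n k u vp.-1 vm.-1 r.-1 t.
    split; last by clear -hsum hp hm; lia.
    have -> : ((vp.-1)%:Z - (vm.-1)%:Z = vp%:Z - vm%:Z)%R by clear -hp hm; lia.
    exact: hfe.
  by have := hmin _ _ _ _ _ hf; clear -hp hm hsum; lia.
pose s : int := if vm == 0%N then 1%R else (-1)%R.
have hs1 : s = 1%R \/ s = (-1)%R by rewrite /s; case: (vm == 0%N); [left|right].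
have hsv : (vp%:Z - vm%:Z = s * (vp + vm)%N%:Z)%R.
  by rewrite /s; case: hv => ->; case: eqP => //= h; try subst; lia.
exists (fun p : 'I_(4 * r + 2) => V n0 (~~ (p < 2 * r + 1))
          (posf k u s (if (p < 2 * r + 1) then nat_of_ord p else (p - (2 * r + 1))))).
move=> p q hpq.
have hp := ltn_ord p; have hq := ltn_ord q.
apply: (@reach _ _ _ _ _ _ _ _ n0 hs hs1 hsv).
- by case: ifP => h; clear -hp h; lia.
- by case: ifP => h; clear -hq h; lia.
move: hpq; rewrite -val_eqE /=.
case: ifP => h1; case: ifP => h2 hne //=.
by clear -hne h1 h2; lia.
Qed.
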